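(* Let $f:\mathbf{R}\to\mathbf{R}$ be either a discontinuous additive function or an everywhere surjective function. Then the path-connected components of the hypograph $H_f=\{(x,y)\in\mathbf{R}^2: y\le f(x)\}$ are exactly the vertical closed half-lines $\{(x_0,y): y\le f(x_0)\}$, $x_0\in\mathbf{R}$. In particular $H_f$ is not path-connected and has uncountably many path components (while being connected).
   Context: A function $f:\mathbf{R}\to\mathbf{R}$ is additive if $f(x+y)=f(x)+f(y)$ for all $x,y$. It is everywhere surjective if for every open interval $(a,b)$ with $a<b$ and every $y\in\mathbf{R}$ there exists $x\in(a,b)$ with $f(x)=y$. The hypograph of $f$ is $\{(x,y)\in\mathbf{R}^2 : y\le f(x)\}$, with the subspace topology from $\mathbf{R}^2$. *)

(* Defs.v *)
From Stdlib Require Import Reals.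
Open Scope R_scope.

Definition additive (f : R -> R) : Prop :=
  forall x y, f (x + y) = f x + f y.

Definition everywhere_surjective (f : R -> R) : Prop :=
  forall a b y, a < b -> exists x, a < x < b /\ f x = y.

Definition hypograph (f : R -> R) (p : R * R) : Prop := snd p <= f (fst p).

Definition continuous_on01 (g : R -> R) : Prop :=
  forall t, 0 <= t <= 1 -> forall eps, 0 < eps ->
    exists delta, 0 < delta /\
      forall s, 0 <= s <= 1 -> Rabs (s - t) < delta -> Rabs (g s - g t) < eps.

(* p and q are joined by a path in S: a continuous map [0,1] -> R^2
   (continuity into R^2 = continuity of both coordinates) with values in S. *)
Definition path_joined (S : R * R -> Prop) (p q : R * R) : Prop :=
  exists g1 g2 : R -> R,
    continuous_on01 g1 /\ continuous_on01 g2 /\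
    (g1 0, g2 0) = p /\ (g1 1, g2 1) = q /\
    forall t, 0 <= t <= 1 -> S (g1 t, g2 t).

Definition path_connected (S : R * R -> Prop) : Prop :=
  forall p q, S p -> S q -> path_joined S p q.

Definition open2 (U : R * R -> Prop) : Prop :=
  forall p, U p -> exists r, 0 < r /\
    forall q, Rabs (fst q - fst p) < r -> Rabs (snd q - snd p) < r -> U q.

Definition connected2 (S : R * R -> Prop) : Prop :=
  forall U V : R * R -> Prop, open2 U -> open2 V ->
    (forall p, S p -> U p \/ V p) ->
    (forall p, S p -> U p -> V p -> False) ->
    (exists p, S p /\ U p) -> (exists p, S p /\ V p) -> False.

(* S has at most countably many path components: some sequence of points of S
   meets every path component. *)
Definition countably_many_path_components (S : R * R -> Prop) : Prop :=
  exists c : nat -> R * R, (forall n, S (c n)) /\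
    forall p, S p -> exists n, path_joined S (c n) p.

(* Main.v *)
Require Import Defs.
From Stdlib Require Import Reals Lra Classical.
Open Scope R_scope.


Lemma add0 f : additive f -> f 0 = 0.
Proof. intros h. pose proof (h 0 0). rewrite Rplus_0_r in H. lra. Qed.

Lemma addN f x : additive f -> f (- x) = - f x.
Proof. intros h. pose proof (h x (-x)). rewrite Rplus_opp_r, add0 in H; auto. lra. Qed.

Lemma addn f n x : additive f -> f (INR n * x) = INR n * f x.
Proof.
  intros h. induction n. simpl. rewrite Rmult_0_l, add0; auto. lra.
  rewrite S_INR. replace ((INR n + 1) * x) with (INR n * x + x) by ring.
  rewrite h, IHn. ring.
Qed.

Lemma add_core f d K : additive f -> 0 < d -> (forall h, Rabs h < d -> Rabs (f h) <= K) ->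
  continuity f.
Proof.
  intros hf d0 hK x. unfold continuity_pt, continue_in, limit1_in, limit_in. simpl. unfold R_dist.
  intros eps heps.
  assert (hK0 : 0 < Rabs K + 1) by (pose proof (Rabs_pos K); lra).
  destruct (archimed_cor1 (eps / (Rabs K + 1))) as [N [hN N0]].
  { apply Rdiv_lt_0_compat; lra. }
  assert (IN : 0 < INR N) by (apply lt_0_INR; auto).
  exists (d / INR N). split. apply Rdiv_lt_0_compat; lra.
  intros y [_ hy].
  replace (f y - f x) with (f (y - x)).
  2:{ pose proof (hf (y - x) x). replace (y - x + x) with y in H by ring. lra. }
  set (h := y - x) in *.
  assert (Rabs (INR N * h) < d).
  { rewrite Rabs_mult, Rabs_right by lra.
    apply (Rmult_lt_compat_l (INR N)) in hy; auto.
    replace (INR N * (d / INR N)) with d in hy by (field; lra). lra. }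
  apply hK in H. rewrite addn, Rabs_mult, Rabs_right in H by (auto; lra).
  assert (K <= Rabs K) by apply RRle_abs.
  assert (Rabs (f h) <= Rabs K * / INR N).
  { apply (Rmult_le_reg_l (INR N)); auto. replace (INR N * (Rabs K * / INR N)) with (Rabs K) by (field; lra). lra. }
  assert (Rabs K * / INR N <= Rabs K * (eps / (Rabs K + 1))).
  { apply Rmult_le_compat_l. apply Rabs_pos. lra. }
  assert (Rabs K * (eps / (Rabs K + 1)) < eps).
  { apply (Rmult_lt_reg_r (Rabs K + 1)); auto. replace (Rabs K * (eps / (Rabs K + 1)) * (Rabs K + 1)) with (Rabs K * eps) by (field; lra). nra. }
  lra.
Qed.

Definition UnbA (f : R -> R) := forall a b M, a < b -> exists x, a < x < b /\ M < f x.
Definition UnbB (f : R -> R) := forall a b M, a < b -> exists x, a < x < b /\ f x < M.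

Lemma add_unb f : additive f -> ~ continuity f -> UnbA f /\ UnbB f.
Proof.
  intros hf hc. set (c := fun a b : R => (a + b) / 2). split.
  - intros a b M hab. apply NNPP. intro hn. apply hc.
    apply (add_core f ((b - a)/2) (Rabs (M - f ((a+b)/2)))); auto. lra.
    intros h hh. apply Rabs_def2 in hh.
    assert (forall k, Rabs k < (b - a) / 2 -> f k <= M - f ((a+b)/2)).
    { intros k hk. apply Rabs_def2 in hk. apply Rnot_lt_le. intro hl. apply hn.
      exists ((a+b)/2 + k). split. lra. rewrite hf. lra. }
    pose proof (H h ltac:(apply Rabs_def1; lra)). pose proof (H (-h) ltac:(apply Rabs_def1; lra)).
    rewrite addN in H1 by auto. pose proof (RRle_abs (M - f ((a+b)/2))).
    apply Rabs_le. lra.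
  - intros a b M hab. apply NNPP. intro hn. apply hc.
    apply (add_core f ((b - a)/2) (Rabs (f ((a+b)/2) - M))); auto. lra.
    intros h hh. apply Rabs_def2 in hh.
    assert (forall k, Rabs k < (b - a) / 2 -> M - f ((a+b)/2) <= f k).
    { intros k hk. apply Rabs_def2 in hk. apply Rnot_lt_le. intro hl. apply hn.
      exists ((a+b)/2 + k). split. lra. rewrite hf. lra. }
    pose proof (H h ltac:(apply Rabs_def1; lra)). pose proof (H (-h) ltac:(apply Rabs_def1; lra)).
    rewrite addN in H1 by auto. pose proof (RRle_abs (f ((a+b)/2) - M)).
    apply Rabs_le. lra.
Qed.

Lemma surj_unb f : everywhere_surjective f -> UnbA f /\ UnbB f.
Proof.
  intros hf. split; intros a b M hab.
  - destruct (hf a b (M + 1) hab) as [x [hx e]]. exists x. split; auto. lra.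
  - destruct (hf a b (M - 1) hab) as [x [hx e]]. exists x. split; auto. lra.
Qed.

Definition step (v : R) (p : R * R) : R * R :=
  let (a, b) := p in
  if Rlt_dec v ((a + b) / 2) then ((a + 2 * b) / 3, b) else (a, (2 * a + b) / 3).

Fixpoint ivs (u : nat -> R) (n : nat) : R * R :=
  match n with O => (0, 1) | S k => step (u k) (ivs u k) end.

Lemma step_prop v a b : a < b ->
  let p := step v (a, b) in a <= fst p /\ fst p < snd p /\ snd p <= b /\ (v < fst p \/ snd p < v).
Proof.
  intros hab. simpl. destruct (Rlt_dec v ((a+b)/2)); simpl; lra.
Qed.

Lemma ivs_prop u n : fst (ivs u n) < snd (ivs u n) /\
  fst (ivs u n) <= fst (ivs u (S n)) /\ snd (ivs u (S n)) <= snd (ivs u n) /\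
  (u n < fst (ivs u (S n)) \/ snd (ivs u (S n)) < u n).
Proof.
  induction n.
  - simpl. pose proof (step_prop (u 0%nat) 0 1 ltac:(lra)). simpl in H. lra.
  - destruct IHn as [h1 [h2 [h3 h4]]].
    assert (hl : fst (ivs u (S n)) < snd (ivs u (S n))).
    { change (ivs u (S n)) with (step (u n) (ivs u n)). destruct (ivs u n) as [a b].
      pose proof (step_prop (u n) a b h1). simpl in *. lra. }
    split; auto.
    change (ivs u (S (S n))) with (step (u (S n)) (ivs u (S n))).
    destruct (ivs u (S n)) as [a b]. pose proof (step_prop (u (S n)) a b hl). simpl in *. lra.
Qed.

Lemma ivs_mono u n m : (n <= m)%nat -> fst (ivs u n) <= fst (ivs u m) /\ snd (ivs u m) <= snd (ivs u n).
Proof.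
  induction 1. lra. pose proof (ivs_prop u m). lra.
Qed.

Lemma ivs_ab u n m : fst (ivs u n) <= snd (ivs u m).
Proof.
  destruct (Nat.le_ge_cases n m) as [h|h].
  - pose proof (ivs_mono u n m h). pose proof (ivs_prop u m). lra.
  - pose proof (ivs_mono u m n h). pose proof (ivs_prop u n). lra.
Qed.

Lemma R_not_enum (u : nat -> R) : exists x, forall n, u n <> x.
Proof.
  set (E := fun x => exists n, x = fst (ivs u n)).
  assert (bd : bound E). { exists (snd (ivs u 0)). intros x [n ->]. apply ivs_ab. }
  assert (ne : exists x, E x) by (exists (fst (ivs u 0)); exists 0%nat; auto).
  destruct (completeness E bd ne) as [s [ub lub]].
  exists s. intros n e.
  assert (h1 : fst (ivs u (S n)) <= s) by (apply ub; exists (S n); auto).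
  assert (h2 : s <= snd (ivs u (S n))).
  { apply lub. intros x [k ->]. apply ivs_ab. }
  pose proof (ivs_prop u n). lra.
Qed.

Definition ropen (a b : R) (P : R -> Prop) :=
  forall x, a <= x <= b -> P x -> exists r, 0 < r /\ forall y, a <= y <= b -> Rabs (y - x) < r -> P y.

Lemma conn1 (P Q : R -> Prop) (a b : R) : a <= b -> P a -> Q b ->
  (forall x, a <= x <= b -> P x \/ Q x) -> (forall x, a <= x <= b -> P x -> Q x -> False) ->
  ropen a b P -> ropen a b Q -> False.
Proof.
  intros hab Pa Qb cov dis oP oQ.
  set (E := fun x => a <= x <= b /\ forall z, a <= z <= x -> P z).
  assert (Eb : bound E) by (exists b; intros x [h _]; lra).
  assert (Ea : exists x, E x).
  { exists a. split. lra. intros z hz. replace z with a by lra. exact Pa. }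
  destruct (completeness E Eb Ea) as [s [ub lub]].
  assert (sa : a <= s) by (apply ub; destruct Ea as [x hx]; split; [lra| intros z hz; replace z with a by lra; exact Pa]).
  assert (sb : s <= b) by (apply lub; intros x [h _]; lra).
  assert (below : forall z, z < s -> exists e, E e /\ z < e).
  { intros z hz. apply NNPP. intro hn. assert (s <= z). apply lub. intros e he.
    apply Rnot_lt_le. intro hlt. apply hn. exists e; auto. lra. }
  destruct (cov s (conj sa sb)) as [Ps|Qs].
  - destruct (oP s (conj sa sb) Ps) as [r [r0 hr]].
    destruct (Req_dec s b) as [->|sneb].
    + exact (dis b (conj hab (Rle_refl b)) Ps Qb).
    + set (t := Rmin b (s + r/2)).
      assert (Et : E t).
      { split. unfold t. split. apply Rmin_glb; lra. apply Rmin_l.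
        intros z hz. destruct (Rlt_le_dec z s) as [zs|zs].
        - destruct (below z zs) as [e [[he1 he2] ze]]. apply he2. lra.
        - apply hr. split; try lra. unfold t in hz. pose proof (Rmin_l b (s + r/2)); lra.
          unfold t in hz. pose proof (Rmin_r b (s + r/2)). apply Rabs_def1; lra. }
      pose proof (ub t Et). unfold t in H.
      assert (Rmin b (s + r / 2) > s) by (apply Rmin_Rgt_r; lra). lra.
  - destruct (oQ s (conj sa sb) Qs) as [r [r0 hr]].
    destruct (Req_dec s a) as [->|snea].
    + exact (dis a (conj (Rle_refl a) hab) Pa Qs).
    + set (z := Rmax a (s - r/2)).
      assert (zs : z < s) by (unfold z; apply Rmax_lub_lt; lra).
      destruct (below z zs) as [e [[he1 he2] ze]].
      assert (es : e <= s) by (apply ub; split; auto).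
      apply (dis e he1). apply he2. lra.
      apply hr. auto. unfold z in ze. pose proof (Rmax_r a (s - r/2)). apply Rabs_def1; lra.
Qed.
Lemma cont_open_lt (g : R -> R) a b x : continuous_on01 g -> 0 <= a -> b <= 1 ->
  ropen a b (fun u => g u < x).
Proof.
  intros hg ha hb u hu gu. destruct (hg u ltac:(lra) (x - g u) ltac:(lra)) as [d [d0 hd]].
  exists d; split; auto. intros y hy hyu. pose proof (hd y ltac:(lra) hyu).
  apply Rabs_def2 in H. lra.
Qed.

Lemma cont_open_gt (g : R -> R) a b x : continuous_on01 g -> 0 <= a -> b <= 1 ->
  ropen a b (fun u => x < g u).
Proof.
  intros hg ha hb u hu gu. destruct (hg u ltac:(lra) (g u - x) ltac:(lra)) as [d [d0 hd]].
  exists d; split; auto. intros y hy hyu. pose proof (hd y ltac:(lra) hyu).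
  apply Rabs_def2 in H. lra.
Qed.

Lemma ivt01 (g : R -> R) a b x : continuous_on01 g -> 0 <= a -> a <= b -> b <= 1 ->
  (g a < x < g b \/ g b < x < g a) -> exists u, a <= u <= b /\ g u = x.
Proof.
  intros hg ha hab hb hx. apply NNPP. intro hn.
  assert (cov : forall u, a <= u <= b -> g u < x \/ x < g u).
  { intros u hu. destruct (Rtotal_order (g u) x) as [h|[h|h]]; auto.
    exfalso; apply hn; exists u; auto. }
  destruct hx as [hx|hx].
  - apply (conn1 (fun u => g u < x) (fun u => x < g u) a b); try tauto; try lra.
    intros; lra. apply cont_open_lt; auto. apply cont_open_gt; auto.
  - apply (conn1 (fun u => x < g u) (fun u => g u < x) a b); try tauto; try lra.
    intros u hu; destruct (cov u hu); auto. intros; lra.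
    apply cont_open_gt; auto. apply cont_open_lt; auto.
Qed.

Lemma loc_const f (hB : UnbB f) g1 g2 : continuous_on01 g1 -> continuous_on01 g2 ->
  (forall t, 0 <= t <= 1 -> hypograph f (g1 t, g2 t)) ->
  forall t, 0 <= t <= 1 -> exists r, 0 < r /\ forall s, 0 <= s <= 1 -> Rabs (s - t) < r -> g1 s = g1 t.
Proof.
  intros c1 c2 hin t ht.
  destruct (c2 t ht 1 ltac:(lra)) as [d [d0 hd]].
  destruct (classic (exists s, 0 <= s <= 1 /\ Rabs (s - t) < d /\ g1 s <> g1 t)) as [[s [hs [hst hne]]]|hno].
  2:{ exists d. split; auto. intros s hs hst. apply NNPP. intro hne. apply hno. exists s; auto. }
  exfalso.
  destruct (hB (Rmin (g1 t) (g1 s)) (Rmax (g1 t) (g1 s)) (g2 t - 1)) as [x [hx fx]].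
  { unfold Rmin, Rmax. destruct (Rle_dec (g1 t) (g1 s)); destruct (Req_dec (g1 t) (g1 s)); try lra; exfalso; auto.
    }
  assert (exists u, Rmin t s <= u <= Rmax t s /\ g1 u = x) as [u [hu gu]].
  { apply ivt01; auto.
    - unfold Rmin; destruct (Rle_dec t s); lra.
    - unfold Rmin, Rmax; destruct (Rle_dec t s); lra.
    - unfold Rmax; destruct (Rle_dec t s); lra.
    - unfold Rmin, Rmax in *. destruct (Rle_dec t s); destruct (Rle_dec (g1 t) (g1 s)); lra. }
  assert (hu01 : 0 <= u <= 1) by (unfold Rmin, Rmax in hu; destruct (Rle_dec t s); lra).
  assert (hut : Rabs (u - t) < d).
  { apply Rabs_def2 in hst. apply Rabs_def1; unfold Rmin, Rmax in hu; destruct (Rle_dec t s); lra. }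
  pose proof (hd u hu01 hut). apply Rabs_def2 in H.
  pose proof (hin u hu01). unfold hypograph in H0. simpl in H0. rewrite gu in H0. lra.
Qed.

Lemma path_const f (hB : UnbB f) g1 g2 : continuous_on01 g1 -> continuous_on01 g2 ->
  (forall t, 0 <= t <= 1 -> hypograph f (g1 t, g2 t)) -> g1 0 = g1 1.
Proof.
  intros c1 c2 hin. apply NNPP. intro hn.
  apply (conn1 (fun u => g1 u = g1 0) (fun u => g1 u <> g1 0) 0 1); auto; try lra.
  - intros x _. apply classic.
  - intros u hu e. destruct (loc_const f hB g1 g2 c1 c2 hin u hu) as [r [r0 hr]].
    exists r. split; auto. intros y hy hyu. rewrite hr; auto.
  - intros u hu ne. assert (0 < Rabs (g1 u - g1 0)) by (apply Rabs_pos_lt; intro; apply ne; lra).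
    destruct (c1 u hu _ H) as [d [d0 hd]]. exists d. split; auto. intros y hy hyu e.
    pose proof (hd y hy hyu). rewrite e in H0. rewrite Rabs_minus_sym in H0. lra.
Qed.

Lemma open2_vert U x a b : open2 U -> ropen a b (fun y => U (x, y)).
Proof.
  intros oU y hy Uy. destruct (oU _ Uy) as [r [r0 hr]]. exists r. split; auto.
  intros y' hy' hyy. apply hr; simpl; auto. replace (x - x) with 0 by ring. rewrite Rabs_R0. auto.
Qed.

Lemma vert_same f U V : open2 U -> open2 V -> (forall p, hypograph f p -> U p \/ V p) ->
  (forall p, hypograph f p -> U p -> V p -> False) ->
  forall x y1 y2, y1 <= f x -> y2 <= f x -> U (x, y1) -> V (x, y2) -> False.
Proof.
  intros oU oV cov dis x y1 y2 h1 h2 U1 V2.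
  destruct (Rle_dec y1 y2).
  - apply (conn1 (fun y => U (x, y)) (fun y => V (x, y)) y1 y2); auto.
    intros y hy. apply cov. unfold hypograph; simpl; lra.
    intros y hy. apply dis. unfold hypograph; simpl; lra.
    apply open2_vert; auto. apply open2_vert; auto.
  - apply (conn1 (fun y => V (x, y)) (fun y => U (x, y)) y2 y1); auto. lra.
    intros y hy. destruct (cov (x, y)); auto. unfold hypograph; simpl; lra.
    intros y hy a b. apply (dis (x, y)); auto. unfold hypograph; simpl; lra.
    apply open2_vert; auto. apply open2_vert; auto.
Qed.

Lemma hor_open f (hA : UnbA f) U V : open2 U -> open2 V -> (forall p, hypograph f p -> U p \/ V p) ->
  (forall p, hypograph f p -> U p -> V p -> False) ->
  forall x0, U (x0, f x0) -> exists r, 0 < r /\ forall x', Rabs (x' - x0) < r -> U (x', f x').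
Proof.
  intros oU oV cov dis x0 U0. destruct (oU _ U0) as [r [r0 hr]]. exists r. split; auto.
  intros x' hx'. destruct (cov (x', f x')) as [h|V'].
  unfold hypograph; simpl; lra. auto. exfalso.
  destruct (oV _ V') as [r' [r0' hr']]. simpl in hr, hr'.
  apply Rabs_def2 in hx'.
  destruct (hA (Rmax (x0 - r) (x' - r')) (Rmin (x0 + r) (x' + r')) (Rmax (f x0) (f x'))) as [x'' [hx'' fx'']].
  { apply Rmax_lub_lt; apply Rmin_glb_lt; lra. }
  pose proof (Rmax_l (x0 - r) (x' - r')). pose proof (Rmax_r (x0 - r) (x' - r')).
  pose proof (Rmin_l (x0 + r) (x' + r')). pose proof (Rmin_r (x0 + r) (x' + r')).
  pose proof (Rmax_l (f x0) (f x')). pose proof (Rmax_r (f x0) (f x')).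
  apply (vert_same f U V oU oV cov dis x'' (f x0) (f x')); try lra.
  - apply hr; simpl. apply Rabs_def1; lra. replace (f x0 - f x0) with 0 by ring. rewrite Rabs_R0; auto.
  - apply hr'; simpl. apply Rabs_def1; lra. replace (f x' - f x') with 0 by ring. rewrite Rabs_R0; auto.
Qed.

Lemma connected_hyp f (hA : UnbA f) : connected2 (hypograph f).
Proof.
  intros U V oU oV cov dis [[px py] [Hp Up]] [[qx qy] [Hq Vq]].
  assert (cov' : forall p, hypograph f p -> V p \/ U p) by (intros p hp; destruct (cov p hp); auto).
  assert (dis' : forall p, hypograph f p -> V p -> U p -> False) by (intros p hp a b; apply (dis p hp b a)).
  unfold hypograph in Hp, Hq; simpl in Hp, Hq.
  assert (A : U (px, f px)).
  { destruct (cov (px, f px)) as [h|h]; auto. unfold hypograph; simpl; lra.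
    exfalso. apply (vert_same f U V oU oV cov dis px py (f px)); auto; lra. }
  assert (B : V (qx, f qx)).
  { destruct (cov (qx, f qx)) as [h|h]; auto. unfold hypograph; simpl; lra.
    exfalso. apply (vert_same f U V oU oV cov dis qx (f qx) qy); auto; lra. }
  assert (hc : forall x, U (x, f x) \/ V (x, f x)) by (intros; apply cov; unfold hypograph; simpl; lra).
  assert (hd : forall x, U (x, f x) -> V (x, f x) -> False) by (intros; apply (dis (x, f x)); auto; unfold hypograph; simpl; lra).
  assert (oA : forall a b, ropen a b (fun x => U (x, f x))).
  { intros a b x _ hx. destruct (hor_open f hA U V oU oV cov dis x hx) as [r [r0 hr]].
    exists r; split; auto. }
  assert (oB : forall a b, ropen a b (fun x => V (x, f x))).
  { intros a b x _ hx. destruct (hor_open f hA V U oV oU cov' dis' x hx) as [r [r0 hr]].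
    exists r; split; auto. }
  destruct (Rle_dec px qx).
  - apply (conn1 (fun x => U (x, f x)) (fun x => V (x, f x)) px qx); auto.
    intros x _; apply hd.
  - apply (conn1 (fun x => V (x, f x)) (fun x => U (x, f x)) qx px); auto. lra.
    intros x _; destruct (hc x); auto. intros x _ a b; apply (hd x b a).
Qed.

Lemma lin_cont a c : continuous_on01 (fun t => a + t * c).
Proof.
  intros t ht eps he. exists (eps / (Rabs c + 1)).
  assert (0 < Rabs c + 1) by (pose proof (Rabs_pos c); lra).
  split. apply Rdiv_lt_0_compat; lra.
  intros s hs hst. replace (a + s * c - (a + t * c)) with ((s - t) * c) by ring.
  rewrite Rabs_mult.
  assert (Rabs (s - t) * Rabs c <= Rabs (s - t) * (Rabs c + 1)).
  { apply Rmult_le_compat_l. apply Rabs_pos. lra. }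
  assert (Rabs (s - t) * (Rabs c + 1) < eps / (Rabs c + 1) * (Rabs c + 1)).
  { apply Rmult_lt_compat_r; lra. }
  replace (eps / (Rabs c + 1) * (Rabs c + 1)) with eps in H1 by (field; lra). lra.
Qed.

Lemma const_cont a : continuous_on01 (fun _ => a).
Proof.
  intros t ht eps he. exists 1. split. lra. intros. replace (a - a) with 0 by ring. rewrite Rabs_R0; auto.
Qed.

Theorem mainTheorem11 (f : R -> R) :
  ((additive f /\ ~ continuity f) \/ everywhere_surjective f) ->
  (* path components are exactly the vertical half-lines {(x0,y) | y <= f x0} *)
  (forall p q, hypograph f p -> hypograph f q ->
     (path_joined (hypograph f) p q <-> fst p = fst q)) /\
  ~ path_connected (hypograph f) /\
  ~ countably_many_path_components (hypograph f) /\
  connected2 (hypograph f).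
Proof.
  intros H. assert (UnbA f /\ UnbB f) as [hA hB].
  { destruct H as [[h1 h2]|h]. apply add_unb; auto. apply surj_unb; auto. }
  assert (iff1 : forall p q, hypograph f p -> hypograph f q ->
     (path_joined (hypograph f) p q <-> fst p = fst q)).
  { intros [px py] [qx qy] hp hq; simpl. unfold hypograph in hp, hq; simpl in hp, hq. split.
    - intros [g1 [g2 [c1 [c2 [e0 [e1 hin]]]]]]. injection e0; injection e1; intros; subst.
      apply (path_const f hB g1 g2); auto.
    - intros ->. exists (fun _ => qx), (fun t => py + t * (qy - py)).
      split. apply const_cont. split. apply lin_cont.
      split. f_equal; ring. split. f_equal; ring.
      intros t ht. unfold hypograph; simpl. nra. }
  split; auto. split.
  - intro hpc. assert (hypograph f (0, f 0)) by (unfold hypograph; simpl; lra).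
    assert (hypograph f (1, f 1)) by (unfold hypograph; simpl; lra).
    pose proof (hpc _ _ H0 H1). apply (iff1 _ _ H0 H1) in H2. simpl in H2. lra.
  - split.
    + intros [c [hc hcov]]. destruct (R_not_enum (fun n => fst (c n))) as [x hx].
      assert (hypograph f (x, f x)) by (unfold hypograph; simpl; lra).
      destruct (hcov _ H0) as [n hn]. apply (iff1 _ _ (hc n) H0) in hn. simpl in hn.
      exact (hx n hn).
    + apply connected_hyp; auto.
Qed.
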